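(* Let $\mathcal{C}$ be a harmonic curve in $\mathbb{P}^2$ and let $P\mapsto p$ be a polarity of $\mathbb{P}^2$ whose set of absolute points $\{P: P\in p\}$ is exactly $\mathcal{C}$. Let $\mathcal{Q}$ be a quadrangle with vertices $A,C,B,D$ (in cyclic order) all lying on $\mathcal{C}$. Then $\mathcal{C}_{\mathcal{Q}}=\mathcal{C}$ if and only if the pole of the diagonal line $A\vee B$ lies on the other diagonal line $C\vee D$. Moreover, for any three distinct points $A,C,B\in\mathcal{C}$, letting $Q$ be the pole of $q=A\vee B$ (equivalently $Q=a\wedge b$, where $a,b$ are the polars of $A,B$) and $D=C\cdot\rho_{Q,q}$, the points $A,C,B,D$ are in general position, $D\in\mathcal{C}$, and the quadrangle $\mathcal{Q}$ with vertices $A,C,B,D$ satisfies $\mathcal{C}_{\mathcal{Q}}=\mathcal{C}$.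
   Context: $\mathbb{P}^2$ denotes the projective plane over a field $F$ with $\operatorname{char}F\neq 2$. For distinct points $X,Y$, $X\vee Y$ is the line through them; for distinct lines $\ell,m$, $\ell\wedge m$ is their common point. Maps act on the right. Four distinct collinear points $A,C,B,D$ form a harmonic set with conjugate pairs $\{A,B\}$ and $\{C,D\}$ if the cross-ratio $(A,B;C,D)=-1$. Four distinct concurrent lines form a harmonic pencil with given conjugate pairs if some (equivalently every) line not through their common point meets them in a harmonic set with the corresponding conjugate pairs. For a point $P$ and a line $m$ with $P\notin m$, the harmonic reflection $\rho_{P,m}$ of $\mathbb{P}^2$ fixes $P$ and every point of $m$ and sends every other point $X$ to the harmonic conjugate of $X$ with respect to $P$ and $(X\vee P)\wedge m$. A polarity of $\mathbb{P}^2$ is a bijection $P\mapsto p$ from points to lines such that $P\in q\iff Q\in p$ for all points $P,Q$; $p$ is the polar of $P$ and $P$ the pole of $p$. A quadrangle $\mathcal{Q}$ with vertices $A,C,B,D$ (in cyclic order) consists of four points in general position (no three collinear) together with this cyclic order up to reversal; its diagonal lines are $A\vee B$ and $C\vee D$. The harmonic curve $\mathcal{C}_{\mathcal{Q}}$ is the set consisting of $A,C,B,D$ together with all points $Z\notin\{A,B,C,D\}$ such that $Z\vee A, Z\vee C, Z\vee B, Z\vee D$ are four distinct lines forming a harmonic pencil with conjugate pairs $\{Z\vee A,Z\vee B\}$ and $\{Z\vee C,Z\vee D\}$. A harmonic curve is any set of the form $\mathcal{C}_{\mathcal{Q}}$ (every harmonic curve is the set of absolute points of some polarity). *)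

(* Defs.v *)
From HB Require Import structures.
From mathcomp Require Import all_boot all_order all_algebra.
Set Implicit Arguments. Unset Strict Implicit. Unset Printing Implicit Defensive.
Import Order.TTheory GRing.Theory.
Local Open Scope ring_scope.

Section Proj.
Variable F : fieldType.

(* A nonzero row vector of F^3 is normalized when its first nonzero
   coordinate equals 1.  Each point of P^2(F) has exactly one normalized
   representative, so points are identified with normalized vectors. *)
Definition normalized (v : 'rV[F]_3) : bool :=
  if v 0 0 != 0 then v 0 0 == 1
  else if v 0 1 != 0 then v 0 1 == 1
  else v 0 2%:R == 1.

(* points of P^2(F); lines are represented by their dual coordinates,
   i.e. also by elements of this type *)
Definition point := {v : 'rV[F]_3 | normalized v}.
Definition line := point.

Definition on (X : point) (l : line) : Prop :=
  \sum_(i < 3) (val X) 0 i * (val l) 0 i = 0.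

Definition is_join (X Y : point) (l : line) : Prop :=
  X <> Y /\ on X l /\ on Y l.

Definition is_meet (l m : line) (X : point) : Prop :=
  l <> m /\ on X l /\ on X m.

Definition collinear (X Y Z : point) : Prop :=
  exists l, on X l /\ on Y l /\ on Z l.

(* Four distinct points A, B, C, D form a harmonic set with conjugate pairs
   {A,B} and {C,D}: they are collinear and (A,B;C,D) = -1.  Writing
   C = a A + b B and D = c A + d B (representatives), the cross-ratio is
   (A,B;C,D) = (b c)/(a d), so (A,B;C,D) = -1 iff b c + a d = 0. *)
Definition harmonic (A B C D : point) : Prop :=
  [/\ A <> B, A <> C, A <> D & B <> C] /\ [/\ B <> D & C <> D] /\
  exists a b c d : F,
    [/\ val C = a *: val A + b *: val B,
        val D = c *: val A + d *: val B &
        b * c + a * d = 0].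

Definition harmonic_pencil (Z : point) (l1 l2 l3 l4 : line) : Prop :=
  [/\ l1 <> l2, l1 <> l3, l1 <> l4 & l2 <> l3] /\ [/\ l2 <> l4 & l3 <> l4] /\
  [/\ on Z l1, on Z l2, on Z l3 & on Z l4] /\
  exists m, ~ on Z m /\
    exists X1 X2 X3 X4,
      [/\ is_meet l1 m X1, is_meet l2 m X2, is_meet l3 m X3, is_meet l4 m X4
        & harmonic X1 X2 X3 X4].

Definition general_position (A C B D : point) : Prop :=
  [/\ A <> C, A <> B, A <> D & C <> B] /\ [/\ C <> D & B <> D] /\
  [/\ ~ collinear A C B, ~ collinear A C D, ~ collinear A B D
    & ~ collinear C B D].

(* The harmonic curve C_Q of the quadrangle with vertices A, C, B, D (in
   cyclic order), diagonals A \/ B and C \/ D. *)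
Definition harmonic_curve_of (A C B D : point) (Z : point) : Prop :=
  Z = A \/ Z = C \/ Z = B \/ Z = D \/
  ([/\ Z <> A, Z <> C, Z <> B & Z <> D] /\
   exists la lc lb ld,
     [/\ is_join Z A la, is_join Z C lc, is_join Z B lb, is_join Z D ld
       & harmonic_pencil Z la lb lc ld]).

Definition is_harmonic_curve (S : point -> Prop) : Prop :=
  exists A C B D, general_position A C B D /\
    forall Z, S Z <-> harmonic_curve_of A C B D Z.

Definition is_polarity (pol : point -> line) : Prop :=
  bijective pol /\ forall P Q, on P (pol Q) <-> on Q (pol P).

Definition harmonic_reflection (P : point) (m : line) (X Y : point) : Prop :=
  ((X = P \/ on X m) /\ Y = X) \/
  (X <> P /\ ~ on X m /\
   exists n M, [/\ is_join X P n, is_meet n m M & harmonic P M X Y]).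

End Proj.

(* Main.v *)
From HB Require Import structures.
Require Import Defs.
From mathcomp Require Import all_boot all_order all_algebra.
From mathcomp Require Import ring.
Set Implicit Arguments. Unset Strict Implicit. Unset Printing Implicit Defensive.
Import GRing.Theory.
Local Open Scope ring_scope.



Section Base.
Variable F : fieldType.
Local Notation vec := 'rV[F]_3.

Definition mkv (a b c : F) : vec := \row_(i < 3) nth 0 [:: a; b; c] i.
Lemma mkvE a b c : [/\ mkv a b c 0 0 = a, mkv a b c 0 1 = b & mkv a b c 0 2%:R = c].
Proof. by rewrite !mxE. Qed.

Lemma vec_eq (u v : vec) : u 0 0 = v 0 0 -> u 0 1 = v 0 1 -> u 0 2%:R = v 0 2%:R -> u = v.
Proof.
move=> h0 h1 h2; apply/rowP => i; case: i => [[|[|[|k]]] Hi] //.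
- by have -> : Ordinal Hi = 0 by apply: val_inj.
- by have -> : Ordinal Hi = 1 by apply: val_inj.
- by have -> : Ordinal Hi = 2%:R by apply: val_inj.
Qed.

Lemma vec_nz (v : vec) : v != 0 -> [\/ v 0 0 != 0, v 0 1 != 0 | v 0 2%:R != 0].
Proof.
move=> hv; case: (eqVneq (v 0 0) 0) => h0; last by constructor 1.
case: (eqVneq (v 0 1) 0) => h1; last by constructor 2.
case: (eqVneq (v 0 2%:R) 0) => h2; last by constructor 3.
have : v = 0 by apply: vec_eq; rewrite ?mxE.
by move/eqP: hv.
Qed.

Definition dotv (u v : vec) := u 0 0 * v 0 0 + u 0 1 * v 0 1 + u 0 2%:R * v 0 2%:R.
Definition crossv (u v : vec) : vec :=
  mkv (u 0 1 * v 0 2%:R - u 0 2%:R * v 0 1) (u 0 2%:R * v 0 0 - u 0 0 * v 0 2%:R)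
      (u 0 0 * v 0 1 - u 0 1 * v 0 0).
Definition det3 (u v w : vec) := dotv u (crossv v w).

Ltac vcomp := rewrite /det3 /dotv /crossv ?mxE /=.
Ltac vring := apply: vec_eq; vcomp; ring.

Lemma dotC u v : dotv u v = dotv v u. Proof. vcomp; ring. Qed.
Lemma dotDl a b u v w : dotv (a *: u + b *: v) w = a * dotv u w + b * dotv v w.
Proof. vcomp; ring. Qed.
Lemma dotDr a b u v w : dotv w (a *: u + b *: v) = a * dotv w u + b * dotv w v.
Proof. vcomp; ring. Qed.
Lemma dotZl a u w : dotv (a *: u) w = a * dotv u w. Proof. vcomp; ring. Qed.
Lemma dotZr a u w : dotv w (a *: u) = a * dotv w u. Proof. vcomp; ring. Qed.
Lemma dot0l w : dotv 0 w = 0. Proof. vcomp; ring. Qed.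
Lemma dot_cross1 u v : dotv u (crossv u v) = 0. Proof. vcomp; ring. Qed.
Lemma dot_cross2 u v : dotv v (crossv u v) = 0. Proof. vcomp; ring. Qed.
Lemma crossZl a u v : crossv (a *: u) v = a *: crossv u v. Proof. vring. Qed.
Lemma crossZr a u v : crossv u (a *: v) = a *: crossv u v. Proof. vring. Qed.
Lemma crossvv u : crossv u u = 0. Proof. vring. Qed.
Lemma cross0r u : crossv u 0 = 0. Proof. vring. Qed.
Lemma cross0l u : crossv 0 u = 0. Proof. vring. Qed.
Lemma cross_cross l x y : crossv l (crossv x y) = dotv l y *: x - dotv l x *: y.
Proof. vring. Qed.
Lemma cramer u v w z :
  det3 u v w *: z = det3 z v w *: u + det3 u z w *: v + det3 u v z *: w.
Proof. vring. Qed.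
Lemma dcramer x y z l :
  det3 x y z *: l = dotv l x *: crossv y z + dotv l y *: crossv z x + dotv l z *: crossv x y.
Proof. vring. Qed.

Lemma prop_of_cross (u v : vec) : crossv u v = 0 -> v != 0 -> exists k, u = k *: v.
Proof.
move=> hc hv.
have c0 : u 0 1 * v 0 2%:R = u 0 2%:R * v 0 1.
  by move/rowP: hc => /(_ 0); rewrite !mxE /= => /eqP; rewrite subr_eq0 => /eqP.
have c1 : u 0 2%:R * v 0 0 = u 0 0 * v 0 2%:R.
  by move/rowP: hc => /(_ 1); rewrite !mxE /= => /eqP; rewrite subr_eq0 => /eqP.
have c2 : u 0 0 * v 0 1 = u 0 1 * v 0 0.
  by move/rowP: hc => /(_ 2%:R); rewrite !mxE /= => /eqP; rewrite subr_eq0 => /eqP.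
case/vec_nz: hv => h.
- exists (u 0 0 / v 0 0); apply: vec_eq; rewrite !mxE.
  + by rewrite divfK.
  + by apply: (mulIf h); rewrite mulrAC divfK // c2 mulrC.
  + by apply: (mulIf h); rewrite mulrAC divfK // -c1 mulrC.
- exists (u 0 1 / v 0 1); apply: vec_eq; rewrite !mxE.
  + by apply: (mulIf h); rewrite mulrAC divfK // -c2 mulrC.
  + by rewrite divfK.
  + by apply: (mulIf h); rewrite mulrAC divfK // c0 mulrC.
- exists (u 0 2%:R / v 0 2%:R); apply: vec_eq; rewrite !mxE.
  + by apply: (mulIf h); rewrite mulrAC divfK // c1 mulrC.
  + by apply: (mulIf h); rewrite mulrAC divfK // -c0 mulrC.
  + by rewrite divfK.
Qed.

Lemma normalized_nz (v : vec) : normalized v -> v != 0.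
Proof.
rewrite /normalized; apply: contraTneq => ->; rewrite !mxE eqxx /=.
by rewrite eq_sym oner_eq0.
Qed.

Lemma norm_eq (u v : vec) k : normalized u -> normalized v -> u = k *: v -> u = v.
Proof.
move=> nu nv e.
have un := normalized_nz nu.
have k0 : k != 0 by apply: contraNneq un => k0; rewrite e k0 scale0r.
suff k1 : k = 1 by rewrite e k1 scale1r.
move: nu nv; rewrite /normalized e !mxE !mulf_eq0 !negb_or k0 /=.
case: ifP => [_ /eqP h1 /eqP h2|_]; first by rewrite h2 mulr1 in h1.
case: ifP => [_ /eqP h1 /eqP h2|_ /eqP h1 /eqP h2]; by rewrite h2 mulr1 in h1.
Qed.

Lemma pt_eq (X Y : point F) : crossv (val X) (val Y) = 0 -> X = Y.
Proof.
move=> hc; case: (prop_of_cross hc (normalized_nz (valP Y))) => k e.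
by apply: val_inj; apply: (norm_eq (valP X) (valP Y) e).
Qed.

Lemma cross_neq (X Y : point F) : X <> Y -> crossv (val X) (val Y) != 0.
Proof. by move=> ne; apply/eqP => /pt_eq. Qed.

Definition normv (v : vec) : vec :=
  if v 0 0 != 0 then (v 0 0)^-1 *: v
  else if v 0 1 != 0 then (v 0 1)^-1 *: v else (v 0 2%:R)^-1 *: v.

Lemma normv_ok v : v != 0 -> normalized (normv v) /\ exists2 k, k != 0 & normv v = k *: v.
Proof.
move=> hv; case h0: (v 0 0 != 0).
  have -> : normv v = (v 0 0)^-1 *: v by rewrite /normv h0.
  split; last by exists (v 0 0)^-1; rewrite ?invr_eq0.
  by rewrite /normalized !mxE mulVf // oner_neq0 eqxx.
move/negbFE/eqP: h0 => h0.
case h1: (v 0 1 != 0).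
  have -> : normv v = (v 0 1)^-1 *: v by rewrite /normv h0 eqxx h1.
  split; last by exists (v 0 1)^-1; rewrite ?invr_eq0.
  by rewrite /normalized !mxE h0 mulr0 eqxx /= mulVf // oner_neq0 eqxx.
move/negbFE/eqP: h1 => h1.
have h2 : v 0 2%:R != 0 by case/vec_nz: hv; rewrite ?h0 ?h1 ?eqxx.
have -> : normv v = (v 0 2%:R)^-1 *: v by rewrite /normv h0 h1 eqxx.
split; last by exists (v 0 2%:R)^-1; rewrite ?invr_eq0.
by rewrite /normalized !mxE h0 h1 !mulr0 eqxx /= mulVf.
Qed.

Lemma ptdef_ok : normalized (mkv 1 0 0).
Proof. by rewrite /normalized !mxE /= oner_neq0 eqxx. Qed.
Definition ptdef : point F := @exist _ (@normalized F) _ ptdef_ok.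
Definition pt (v : vec) : point F := insubd ptdef (normv v).

Lemma val_pt v : v != 0 -> exists2 k, k != 0 & val (pt v) = k *: v.
Proof.
move=> hv; case: (normv_ok hv) => hn [k k0 e]; exists k => //.
by rewrite /pt insubdK.
Qed.

Lemma pt_nz (X : point F) : val X != 0.
Proof. exact: normalized_nz (valP X). Qed.

Lemma pt_prop (X : point F) v : v != 0 -> crossv (val X) v = 0 -> X = pt v.
Proof.
move=> hv hc; apply: pt_eq; case: (val_pt hv) => k k0 ->.
by rewrite crossZr hc scaler0.
Qed.

Lemma pt_val (X : point F) : pt (val X) = X.
Proof. by symmetry; apply: pt_prop (pt_nz X) (crossvv _). Qed.

Lemma on_dot (X l : point F) : on X l <-> dotv (val X) (val l) = 0.
Proof.
rewrite /on /dotv !big_ord_recr big_ord0 /= add0r.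
have -> : widen_ord (m:=3) (leqnSn 2) (widen_ord (m:=2) (leqnSn 1) ord_max) = 0 by apply: val_inj.
have -> : widen_ord (m:=3) (leqnSn 2) ord_max = 1 by apply: val_inj.
by have -> : ord_max = 2%:R :> 'I_3 by apply: val_inj.
Qed.

Lemma on_sym (X l : point F) : on X l <-> on l X.
Proof. by rewrite !on_dot dotC. Qed.

Lemma on_pt (X : point F) v : v != 0 -> (on X (pt v) <-> dotv (val X) v = 0).
Proof.
move=> hv; rewrite on_dot; case: (val_pt hv) => k k0 ->; rewrite dotZr.
by split => [/eqP|->]; rewrite ?mulr0 // mulf_eq0 (negPf k0) => /eqP.
Qed.

Lemma line_prop (l x y : vec) : l != 0 -> dotv l x = 0 -> dotv l y = 0 ->
  crossv x y != 0 -> exists k, l = k *: crossv x y.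
Proof.
move=> hl hx hy hc; apply: prop_of_cross => //.
by rewrite cross_cross hx hy !scale0r subr0.
Qed.

Lemma join_uniq (X Y l l' : point F) : X <> Y -> on X l -> on Y l -> on X l' -> on Y l' -> l = l'.
Proof.
move=> ne; rewrite !on_dot => h1 h2 h3 h4.
have hc := cross_neq ne.
case: (line_prop (pt_nz l) _ _ hc); rewrite ?(dotC (val l)) //.
case: (line_prop (pt_nz l') _ _ hc); rewrite ?(dotC (val l')) //.
move=> k' e' k e; apply: pt_eq; rewrite e e' crossZl crossZr crossvv.
by rewrite !scaler0.
Qed.

Lemma meet_uniq (l m X Y : point F) : l <> m -> on X l -> on X m -> on Y l -> on Y m -> X = Y.
Proof.
move=> ne h1 h2 h3 h4; apply: (join_uniq ne); by apply/on_sym.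
Qed.

Lemma det_e (x y : vec) : [/\ det3 x y (mkv 1 0 0) = (crossv x y) 0 0,
  det3 x y (mkv 0 1 0) = (crossv x y) 0 1 & det3 x y (mkv 0 0 1) = (crossv x y) 0 2%:R].
Proof. by split; vcomp; ring. Qed.

Lemma span (x y z : vec) : crossv x y != 0 -> det3 x y z = 0 -> exists a b, z = a *: x + b *: y.
Proof.
move=> hc hd.
have key : forall w, det3 x y w != 0 -> exists a b, z = a *: x + b *: y.
  move=> w hw; exists (det3 z y w / det3 x y w), (det3 x z w / det3 x y w).
  apply: (scalerI hw); rewrite cramer hd scale0r addr0 scalerDr !scalerA.
  by rewrite !(mulrC (det3 x y w)) !divfK.
case: (det_e x y) => d0 d1 d2.
case/vec_nz: hc => h.
- by apply: (key (mkv 1 0 0)); rewrite d0.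
- by apply: (key (mkv 0 1 0)); rewrite d1.
- by apply: (key (mkv 0 0 1)); rewrite d2.
Qed.

Lemma det_line (l x y z : vec) : l != 0 -> dotv l x = 0 -> dotv l y = 0 -> dotv l z = 0 ->
  det3 x y z = 0.
Proof.
move=> hl hx hy hz; apply/eqP; apply: contraNT hl => hd.
apply/eqP; apply: (scalerI hd); by rewrite dcramer hx hy hz !scale0r !addr0 scaler0.
Qed.

Lemma det_cyc x y z : det3 x y z = det3 y z x. Proof. vcomp; ring. Qed.
Lemma det_swap12 x y z : det3 x y z = - det3 y x z. Proof. vcomp; ring. Qed.
Lemma det_swap23 x y z : det3 x y z = - det3 x z y. Proof. vcomp; ring. Qed.

Lemma exists_perp (u : vec) : u != 0 -> exists2 v, v != 0 & dotv u v = 0.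
Proof.
have nz : forall (v : vec) i, v 0 i != 0 -> v != 0.
  by move=> v i; apply: contraNneq => ->; rewrite mxE.
case/vec_nz => h.
- exists (mkv (u 0 1) (- u 0 0) 0); last by vcomp; ring.
  by apply: (nz _ 1); rewrite !mxE /= oppr_eq0.
- by exists (mkv (u 0 1) (- u 0 0) 0); [apply: (nz _ 0); rewrite !mxE | vcomp; ring].
- by exists (mkv (u 0 2%:R) 0 (- u 0 0)); [apply: (nz _ 0); rewrite !mxE | vcomp; ring].
Qed.

Lemma collinear_det (X Y Z : point F) : collinear X Y Z <-> det3 (val X) (val Y) (val Z) = 0.
Proof.
split.
  case=> l; rewrite !on_dot => -[h1 [h2 h3]].
  by apply: (det_line (pt_nz l)); rewrite dotC.
move=> hd.
have mk : forall v, v != 0 -> dotv (val X) v = 0 -> dotv (val Y) v = 0 -> dotv (val Z) v = 0 ->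
    collinear X Y Z.
  by move=> v hv h1 h2 h3; exists (pt v); split; [|split]; apply/on_pt.
case: (eqVneq (crossv (val X) (val Y)) 0) => hxy; last first.
  apply: (mk _ hxy); rewrite ?dot_cross1 ?dot_cross2 //.
  by move: hd; rewrite det_cyc det_cyc.
have eXY := pt_eq hxy; subst Y.
case: (eqVneq (crossv (val X) (val Z)) 0) => hxz; last first.
  by apply: (mk _ hxz); rewrite ?dot_cross1 ?dot_cross2.
have eXZ := pt_eq hxz; subst Z.
by case: (exists_perp (pt_nz X)) => v hv h; apply: (mk _ hv).
Qed.

Lemma ncol_det (X Y Z : point F) : ~ collinear X Y Z -> det3 (val X) (val Y) (val Z) != 0.
Proof. by move=> nc; apply/eqP => /collinear_det. Qed.

End Base.



Section L1.
Variable F : fieldType.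
Hypothesis hchar : (2%:R : F) != 0.
Local Notation vec := 'rV[F]_3.
Local Notation point := (point F).
Ltac vcomp := rewrite /det3 /dotv /crossv ?mxE /=.

Lemma det0_perm (x y z : vec) : det3 x y z = 0 ->
  [/\ det3 y z x = 0, det3 z x y = 0, det3 y x z = 0, det3 x z y = 0 & det3 z y x = 0].
Proof.
move=> h; split.
- by rewrite -det_cyc.
- by rewrite det_cyc.
- by rewrite det_swap12 h oppr0.
- by rewrite det_swap23 h oppr0.
- by rewrite det_swap23 det_cyc h oppr0.
Qed.

Lemma two_lines (x y z w : vec) : crossv x y != 0 -> det3 x y z = 0 -> det3 x y w = 0 ->
  det3 y z w = 0.
Proof.
move=> hc hz hw; case: (span hc hz) => a [b ->]; case: (span hc hw) => c [d ->].
vcomp; ring.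
Qed.

Lemma comb_on (Z V X l : point) : Z <> V -> on Z l -> on V l -> on X l ->
  exists a b, val X = a *: val Z + b *: val V.
Proof.
move=> ne; rewrite !on_dot => h1 h2 h3; apply: (span (cross_neq ne)).
by apply: (det_line (pt_nz l)); rewrite dotC.
Qed.

Lemma meet_comb (Z V X l m : point) : Z <> V -> on Z l -> on V l -> on X l -> on X m ->
  ~ on Z m -> exists a b, b != 0 /\ val X = a *: val Z + b *: val V.
Proof.
move=> ne h1 h2 h3 h4 nZ; case: (comb_on ne h1 h2 h3) => a [b e].
exists a, b; split => //; apply/eqP => b0; apply: nZ.
have -> : Z = X by apply: pt_eq; rewrite e b0 scale0r addr0 crossZr crossvv scaler0.
done.
Qed.

Lemma det_comb1 (z v w : vec) a b : det3 z (a *: z + b *: v) w = b * det3 z v w.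
Proof. vcomp; ring. Qed.
Lemma det_comb2 (z v w : vec) a b : det3 z w (a *: z + b *: v) = b * det3 z w v.
Proof. vcomp; ring. Qed.

Definition Gf (z x1 x2 x3 x4 : vec) :=
  det3 z x1 x3 * det3 z x2 x4 + det3 z x1 x4 * det3 z x2 x3.
Definition Hq (a c b d z : vec) := Gf z a b c d.

Lemma Gf_harm (z x1 x2 : vec) a b c d :
  Gf z x1 x2 (a *: x1 + b *: x2) (c *: x1 + d *: x2) = - (b * c + a * d) * (det3 z x1 x2) ^+ 2.
Proof. rewrite /Gf; vcomp; ring. Qed.

Lemma harm_G (X1 X2 X3 X4 : point) z : harmonic X1 X2 X3 X4 ->
  Gf z (val X1) (val X2) (val X3) (val X4) = 0.
Proof.
case=> _ [_ [a [b [c [d [e3 e4 h]]]]]]; rewrite e3 e4 Gf_harm h.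
by rewrite oppr0 mul0r.
Qed.

Lemma on_ptc (V : point) (z a : vec) : crossv z a != 0 ->
  (on V (pt (crossv z a)) <-> det3 z a (val V) = 0).
Proof. move=> h; rewrite on_pt // det_cyc det_cyc; exact: iff_refl. Qed.

Lemma Hq_vert (a c b d : vec) : [/\ Hq a c b d a = 0, Hq a c b d c = 0, Hq a c b d b = 0
   & Hq a c b d d = 0].
Proof. by split; rewrite /Hq /Gf; vcomp; ring. Qed.

Lemma Hq_AB (a c b d : vec) u v :
  Hq a c b d (u *: a + v *: b) = - 2%:R * u * v * det3 a b c * det3 a b d.
Proof. rewrite /Hq /Gf; vcomp; ring. Qed.
Lemma Hq_CD (a c b d : vec) u v :
  Hq a c b d (u *: c + v *: d) = - 2%:R * u * v * det3 a c d * det3 b c d.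
Proof. rewrite /Hq /Gf; vcomp; ring. Qed.


Ltac kill h nc := let k1 := fresh in let k2 := fresh in let k3 := fresh in
  let k4 := fresh in let k5 := fresh in
  case: (det0_perm h) => k1 k2 k3 k4 k5; move: nc;
  rewrite ?h ?k1 ?k2 ?k3 ?k4 ?k5 eqxx.

Lemma comb_pt_eq (Z V : point) u : val Z = u *: val V -> Z = V.
Proof. by move=> e; apply: pt_eq; rewrite e crossZl crossvv scaler0. Qed.

Lemma Hq_nondeg (A C B D Z : point) : general_position A C B D ->
  [/\ Z <> A, Z <> C, Z <> B & Z <> D] ->
  Hq (val A) (val C) (val B) (val D) (val Z) = 0 ->
  [/\ det3 (val Z) (val A) (val C) != 0, det3 (val Z) (val A) (val D) != 0, det3 (val Z) (val B) (val C) != 0 & det3 (val Z) (val B) (val D) != 0] /\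
    (det3 (val Z) (val A) (val B) != 0 /\ det3 (val Z) (val C) (val D) != 0).
Proof.
case=> [[nAC nAB nAD nCB] [[nCD nBD] [n1 n2 n3 n4]]] [nZA nZC nZB nZD] hq.
move/ncol_det: n1 => n1; move/ncol_det: n2 => n2; move/ncol_det: n3 => n3.
move/ncol_det: n4 => n4.
have F1 : det3 (val Z) (val A) (val C) = 0 -> det3 (val Z) (val A) (val D) = 0 -> False.
  by move=> h1 h2; have h := two_lines (cross_neq nZA) h1 h2; kill h n2.
have F2 : det3 (val Z) (val A) (val C) = 0 -> det3 (val Z) (val B) (val C) = 0 -> False.
  move=> h1 h2; case: (det0_perm h1) => _ _ _ h1' _; case: (det0_perm h2) => _ _ _ h2' _.
  by have h := two_lines (cross_neq nZC) h1' h2'; kill h n1.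
have F3 : det3 (val Z) (val A) (val D) = 0 -> det3 (val Z) (val B) (val D) = 0 -> False.
  move=> h1 h2; case: (det0_perm h1) => _ _ _ h1' _; case: (det0_perm h2) => _ _ _ h2' _.
  by have h := two_lines (cross_neq nZD) h1' h2'; kill h n3.
have F4 : det3 (val Z) (val B) (val C) = 0 -> det3 (val Z) (val B) (val D) = 0 -> False.
  by move=> h1 h2; have h := two_lines (cross_neq nZB) h1 h2; kill h n4.
have hq0 := hq; move: hq; rewrite /Hq /Gf => hq.
have hq1 : det3 (val Z) (val A) (val C) * det3 (val Z) (val B) (val D) = - (det3 (val Z) (val A) (val D) * det3 (val Z) (val B) (val C)).
  by apply/eqP; rewrite -addr_eq0; apply/eqP.
split; first split.
- apply/eqP => h; move: hq1; rewrite h mul0r => /esym/eqP; rewrite oppr_eq0 mulf_eq0.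
  by case/orP => /eqP; [apply: F1 | apply: F2].
- apply/eqP => h; move: hq1; rewrite h mul0r oppr0 => /eqP; rewrite mulf_eq0.
  by case/orP => /eqP; [move=> h'; apply: F1 | apply: F3].
- apply/eqP => h; move: hq1; rewrite h mulr0 oppr0 => /eqP; rewrite mulf_eq0.
  by case/orP => /eqP; [move=> h'; apply: F2 | move=> h'; apply: F4].
- apply/eqP => h; move: hq1; rewrite h mulr0 => /esym/eqP; rewrite oppr_eq0 mulf_eq0.
  by case/orP => /eqP; [move=> h'; apply: F3 | move=> h'; apply: F4].
split.
- apply/eqP => h; case: (det0_perm h) => h' _ _ _ _.
  case: (span (cross_neq nAB) h') => u [v e]; move: hq.
  rewrite -[det3 (val Z) (val A) (val C) * _ + _]/(Hq (val A) (val C) (val B) (val D) (val Z)). rewrite e Hq_AB => /eqP.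
  have n1' : det3 (val A) (val B) (val C) != 0 by apply/eqP => k; kill k n1.
  rewrite !mulf_eq0 oppr_eq0 (negPf hchar) (negPf n1') (negPf n3) /= !orbF.
  case/orP => /eqP u0.
    by apply: nZB; apply: (@comb_pt_eq _ _ v); rewrite e u0 scale0r add0r.
  by apply: nZA; apply: (@comb_pt_eq _ _ u); rewrite e u0 scale0r addr0.
- apply/eqP => h; case: (det0_perm h) => h' _ _ _ _.
  case: (span (cross_neq nCD) h') => u [v e]; move: hq0.
  rewrite e Hq_CD => /eqP.
  have n4' : det3 (val B) (val C) (val D) != 0 by apply/eqP => k; kill k n4.
  rewrite !mulf_eq0 oppr_eq0 (negPf hchar) (negPf n2) (negPf n4') /= !orbF.
  case/orP => /eqP u0.
    by apply: nZD; apply: (@comb_pt_eq _ _ v); rewrite e u0 scale0r add0r.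
  by apply: nZC; apply: (@comb_pt_eq _ _ u); rewrite e u0 scale0r addr0.
Qed.


Lemma det_rep1 (x y : vec) : det3 x y x = 0. Proof. vcomp; ring. Qed.
Lemma det_rep2 (x y : vec) : det3 x y y = 0. Proof. vcomp; ring. Qed.

Lemma exists_nonperp (u : vec) : u != 0 -> exists2 e, e != 0 & dotv u e != 0.
Proof.
have nz : forall (v : vec) i, v 0 i != 0 -> v != 0.
  by move=> v i; apply: contraNneq => ->; rewrite mxE.
case/vec_nz => h.
- exists (mkv 1 0 0); first by apply: (nz _ 0); rewrite !mxE oner_eq0.
  by move: h; vcomp; rewrite !mulr1 !mulr0 !addr0.
- exists (mkv 0 1 0); first by apply: (nz _ 1); rewrite !mxE oner_eq0.
  by move: h; vcomp; rewrite !mulr1 !mulr0 add0r addr0.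
- exists (mkv 0 0 1); first by apply: (nz _ 2%:R); rewrite !mxE oner_eq0.
  by move: h; vcomp; rewrite !mulr1 !mulr0 !add0r.
Qed.

Lemma lines_ne (Z V W : point) : crossv (val Z) (val V) != 0 -> crossv (val Z) (val W) != 0 ->
  det3 (val Z) (val V) (val W) != 0 -> pt (crossv (val Z) (val V)) <> pt (crossv (val Z) (val W)).
Proof.
move=> h1 h2 hd e; have : on W (pt (crossv (val Z) (val W))) by apply/on_ptc => //; exact: det_rep2.
by rewrite -e on_ptc // => /eqP; apply/negP.
Qed.

Lemma on_meet (l m : point) : l <> m -> on (pt (crossv (val l) (val m))) l /\ on (pt (crossv (val l) (val m))) m.
Proof.
move=> ne; have hc := cross_neq ne; split; apply/on_sym; apply/on_pt => //.
  exact: dot_cross1.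
exact: dot_cross2.
Qed.

Lemma meet_ne (Z X Y l l' m : point) : l <> l' -> on Z l -> on Z l' -> ~ on Z m ->
  on X l -> on X m -> on Y l' -> on Y m -> X <> Y.
Proof.
move=> nl h1 h2 nZ hX hXm hY hYm eXY; subst Y; apply: nl.
apply: (join_uniq (X := Z) (Y := X)) => //.
by move=> eZX; subst X.
Qed.

Lemma hcurve_iff (A C B D Z : point) : general_position A C B D ->
  harmonic_curve_of A C B D Z <-> Hq (val A) (val C) (val B) (val D) (val Z) = 0.
Proof.
move=> gp; split.
  case=> [->|[->|[->|[->|[_ [la [lc [lb [ld [jA jC jB jD hp]]]]]]]]]];
    try by case: (Hq_vert (val A) (val C) (val B) (val D)).
  case: hp => _ [_ [_ [m [nZm [X1 [X2 [X3 [X4 [m1 m2 m3 m4 hh]]]]]]]]].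
  case: jA => nZA [ZlA AlA]; case: jB => nZB [ZlB BlB].
  case: jC => nZC [ZlC ClC]; case: jD => nZD [ZlD DlD].
  case: m1 => _ [X1l X1m]; case: m2 => _ [X2l X2m].
  case: m3 => _ [X3l X3m]; case: m4 => _ [X4l X4m].
  case: (meet_comb nZA ZlA AlA X1l X1m nZm) => a1 [b1 [b10 e1]].
  case: (meet_comb nZB ZlB BlB X2l X2m nZm) => a2 [b2 [b20 e2]].
  case: (meet_comb nZC ZlC ClC X3l X3m nZm) => a3 [b3 [b30 e3]].
  case: (meet_comb nZD ZlD DlD X4l X4m nZm) => a4 [b4 [b40 e4]].
  have := harm_G (val Z) hh.
  rewrite /Gf e1 e2 e3 e4 !det_comb1 !det_comb2 => h.
  have : b1 * b2 * b3 * b4 * Hq (val A) (val C) (val B) (val D) (val Z) = 0.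
    by rewrite -h /Hq /Gf; ring.
  by move/eqP; rewrite !mulf_eq0 (negPf b10) (negPf b20) (negPf b30) (negPf b40) /= => /eqP.
move=> hq.
case: (eqVneq Z A) => [->|nZA]; first by left.
case: (eqVneq Z C) => [->|nZC]; first by right; left.
case: (eqVneq Z B) => [->|nZB]; first by right; right; left.
case: (eqVneq Z D) => [->|nZD]; first by right; right; right; left.
have nZ4 : [/\ Z <> A, Z <> C, Z <> B & Z <> D] by split; apply/eqP.
have [[dac dad dbc dbd] [dab dcd]] := Hq_nondeg gp nZ4 hq.
case: nZ4 => {}nZA {}nZC {}nZB {}nZD.
have cA := cross_neq nZA; have cB := cross_neq nZB.
have cC := cross_neq nZC; have cD := cross_neq nZD.
set la := pt (crossv (val Z) (val A)); set lb := pt (crossv (val Z) (val B)).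
set lc := pt (crossv (val Z) (val C)); set ld := pt (crossv (val Z) (val D)).
have ZlA : on Z la by apply/on_ptc => //; exact: det_rep1.
have ZlB : on Z lb by apply/on_ptc => //; exact: det_rep1.
have ZlC : on Z lc by apply/on_ptc => //; exact: det_rep1.
have ZlD : on Z ld by apply/on_ptc => //; exact: det_rep1.
have AlA : on A la by apply/on_ptc => //; exact: det_rep2.
have BlB : on B lb by apply/on_ptc => //; exact: det_rep2.
have ClC : on C lc by apply/on_ptc => //; exact: det_rep2.
have DlD : on D ld by apply/on_ptc => //; exact: det_rep2.
have nab : la <> lb by apply: lines_ne.
have nac : la <> lc by apply: lines_ne.
have nad : la <> ld by apply: lines_ne.
have nbc : lb <> lc by apply: lines_ne.
have nbd : lb <> ld by apply: lines_ne.
have ncd : lc <> ld by apply: lines_ne.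
case: (exists_nonperp (pt_nz Z)) => e e0 ze.
set m := pt e.
have nZm : ~ on Z m by rewrite on_pt // => /eqP; apply/negP.
have lm : forall l, on Z l -> l <> m by move=> l hl elm; apply: nZm; rewrite -elm.
have [X1l X1m] := on_meet (lm _ ZlA).
have [X2l X2m] := on_meet (lm _ ZlB).
have [X3l X3m] := on_meet (lm _ ZlC).
have [X4l X4m] := on_meet (lm _ ZlD).
set X1 := pt (crossv (val la) (val m)) in X1l X1m.
set X2 := pt (crossv (val lb) (val m)) in X2l X2m.
set X3 := pt (crossv (val lc) (val m)) in X3l X3m.
set X4 := pt (crossv (val ld) (val m)) in X4l X4m.
clearbody la lb lc ld m X1 X2 X3 X4.
right; right; right; right; split; first by split.
exists la, lc, lb, ld; split.
- by split; [|split].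
- by split; [|split].
- by split; [|split].
- by split; [|split].
split; first by split.
split; first by split.
split; first by split.
exists m; split; first by [].
exists X1, X2, X3, X4; split.
- by split; [apply: lm | split].
- by split; [apply: lm | split].
- by split; [apply: lm | split].
- by split; [apply: lm | split].
have n12 : X1 <> X2 by apply: (meet_ne nab ZlA ZlB nZm).
have n13 : X1 <> X3 by apply: (meet_ne nac ZlA ZlC nZm).
have n14 : X1 <> X4 by apply: (meet_ne nad ZlA ZlD nZm).
have n23 : X2 <> X3 by apply: (meet_ne nbc ZlB ZlC nZm).
have n24 : X2 <> X4 by apply: (meet_ne nbd ZlB ZlD nZm).
have n34 : X3 <> X4 by apply: (meet_ne ncd ZlC ZlD nZm).
split; first by split.
split; first by split.
case: (comb_on n12 X1m X2m X3m) => a [b e3].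
case: (comb_on n12 X1m X2m X4m) => c [d e4].
exists a, b, c, d; split; [exact: e3 | exact: e4 |].
case: (meet_comb nZA ZlA AlA X1l X1m nZm) => a1 [b1 [b10 f1]].
case: (meet_comb nZB ZlB BlB X2l X2m nZm) => a2 [b2 [b20 f2]].
case: (meet_comb nZC ZlC ClC X3l X3m nZm) => a3 [b3 [b30 f3]].
case: (meet_comb nZD ZlD DlD X4l X4m nZm) => a4 [b4 [b40 f4]].
have G0 : Gf (val Z) (val X1) (val X2) (val X3) (val X4) = 0.
  rewrite /Gf f1 f2 f3 f4 !det_comb1 !det_comb2.
  transitivity (b1 * b2 * b3 * b4 * Hq (val A) (val C) (val B) (val D) (val Z)).
    by rewrite /Hq /Gf; ring.
  by rewrite hq mulr0.
have dz : det3 (val Z) (val X1) (val X2) != 0.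
  apply/eqP => h; apply: nZm; case: (det0_perm h) => h' _ _ _ _.
  case: (span (cross_neq n12) h') => p [q ez].
  move: X1m X2m; rewrite !on_dot => h1 h2.
  by rewrite ez dotDl h1 h2 !mulr0 addr0.
move: G0; rewrite e3 e4 Gf_harm => /eqP; rewrite mulf_eq0 oppr_eq0 expf_eq0 (negPf dz) andbF orbF.
by move/eqP.
Qed.

End L1.



Section Conic.
Variable F : fieldType.
Hypothesis hchar : (2%:R : F) != 0.
Local Notation vec := 'rV[F]_3.
Local Notation point := (point F).
Ltac vcomp := rewrite /det3 /dotv /crossv ?mxE /=.

Variable K : vec -> vec.
Hypothesis Klin : forall a b x y, K (a *: x + b *: y) = a *: K x + b *: K y.
Hypothesis Ksym : forall x y, dotv (K x) y = dotv x (K y).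
Hypothesis Knd : forall x, K x = 0 -> x = 0.

Definition bf x y := dotv (K x) y.
Definition hq x := bf x x.

Lemma K0 : K 0 = 0.
Proof. by have := Klin 0 0 0 0; rewrite !scale0r addr0. Qed.
Lemma KZ a x : K (a *: x) = a *: K x.
Proof. by have := Klin a 0 x 0; rewrite !scale0r !addr0. Qed.
Lemma bf_sym x y : bf x y = bf y x.
Proof. by rewrite /bf Ksym dotC. Qed.
Lemma bfDl a b x y w : bf (a *: x + b *: y) w = a * bf x w + b * bf y w.
Proof. by rewrite /bf Klin dotDl. Qed.
Lemma bfDr a b x y w : bf w (a *: x + b *: y) = a * bf w x + b * bf w y.
Proof. by rewrite /bf dotDr. Qed.
Lemma bfZl a x w : bf (a *: x) w = a * bf x w.
Proof. by rewrite /bf KZ dotZl. Qed.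
Lemma bfZr a x w : bf w (a *: x) = a * bf w x.
Proof. by rewrite /bf dotZr. Qed.
Lemma hqZ a x : hq (a *: x) = a ^+ 2 * hq x.
Proof. by rewrite /hq bfZl bfZr mulrA expr2. Qed.
Lemma hqD a b x y : hq (a *: x + b *: y) = a ^+ 2 * hq x + 2%:R * a * b * bf x y + b ^+ 2 * hq y.
Proof.
rewrite /hq bfDl.
rewrite !bfDr.
rewrite (bf_sym y x).
ring.
Qed.

Lemma Knz (x : vec) : x != 0 -> K x != 0.
Proof. by move=> hx; apply: contraNneq hx => /Knd ->. Qed.

Lemma K_indep (x y : vec) : crossv x y != 0 -> crossv (K x) (K y) != 0.
Proof.
move=> hc; apply/eqP => h.
have hy : y != 0.
  apply: contraNneq hc => ->.
  by rewrite cross0r.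
case: (prop_of_cross h (Knz hy)) => k e.
have : K (1 *: x + (- k) *: y) = 0 by rewrite Klin e scale1r scaleNr subrr.
move/Knd; rewrite scale1r scaleNr => /eqP; rewrite subr_eq0 => /eqP ex.
by move: hc; rewrite ex crossZl crossvv scaler0 eqxx.
Qed.

Lemma sep_vec (l t : vec) : crossv l t != 0 -> exists y, dotv l y = 0 /\ dotv t y != 0.
Proof.
move=> hc; case: (det_e l t) => d0 d1 d2.
have key : forall e, det3 l t e != 0 -> exists y, dotv l y = 0 /\ dotv t y != 0.
  move=> e he; exists (crossv e l); split; first exact: dot_cross2.
  by rewrite -/(det3 t e l) det_cyc det_cyc.
case/vec_nz: hc => h.
- by apply: (key (mkv 1 0 0)); rewrite d0.
- by apply: (key (mkv 0 1 0)); rewrite d1.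
- by apply: (key (mkv 0 0 1)); rewrite d2.
Qed.


Lemma crossC (x y : vec) : crossv x y = - crossv y x.
Proof. apply: vec_eq; vcomp; ring. Qed.

Lemma det_cross_nz (x y z : vec) : det3 x y z != 0 -> crossv y z != 0.
Proof. by apply: contraNneq => h; rewrite /det3 h /dotv !mxE !mulr0 !addr0. Qed.

Variable S : point -> Prop.
Variable pol : point -> point.
Hypothesis hS : forall Z, S Z <-> hq (val Z) = 0.
Hypothesis hpol : is_polarity pol.
Hypothesis habs : forall P, on P (pol P) <-> S P.

Definition good P := crossv (val (pol P)) (K (val P)) = 0.

Lemma pol_inj : injective pol.
Proof. by case: hpol => /bij_inj. Qed.
Lemma pol_sym P Q : on P (pol Q) <-> on Q (pol P).
Proof. by case: hpol. Qed.

Lemma S_pt (w : vec) : w != 0 -> hq w = 0 -> S (pt w).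
Proof. move=> hw h; apply/hS; case: (val_pt hw) => k _ ->; by rewrite hqZ h mulr0. Qed.

Lemma dot_nz (t w : vec) : dotv t w != 0 -> w != 0.
Proof. by apply: contraNneq => ->; rewrite dotC dot0l. Qed.

Lemma step1 P : S P -> good P.
Proof.
move=> SP; have hp0 : hq (val P) = 0 by apply/hS.
set l := val (pol P); set t := K (val P).
have lp : dotv l (val P) = 0 by rewrite dotC; apply/on_dot/habs.
have tp : dotv t (val P) = 0 by [].
have contra : forall w, hq w = 0 -> dotv l w = 0 -> dotv t w != 0 -> False.
  move=> w hw lw tw; have w0 := dot_nz tw.
  case: (val_pt w0) => k k0 eW.
  have SW := S_pt w0 hw.
  have WP : on (pt w) (pol P) by rewrite on_dot eW dotZl dotC lw mulr0.
  have nWP : pt w <> P.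
    move=> e; have : dotv t (val (pt w)) = 0 by rewrite e.
    rewrite eW dotZr => /eqP; rewrite mulf_eq0 (negPf k0) /= => /eqP h.
    by rewrite h eqxx in tw.
  have PW : on P (pol (pt w)) by apply/pol_sym.
  have WW : on (pt w) (pol (pt w)) by apply/habs.
  have PP : on P (pol P) by apply/habs.
  exact: nWP (pol_inj (join_uniq nWP WW PW WP PP)).
apply/eqP; apply: contraT => hc.
case: (sep_vec hc) => y [ly ty].
case: (eqVneq (hq y) 0) => hy; first by case: (contra y).
set s := - (2%:R * dotv t y) / hq y.
have s0 : s != 0 by rewrite /s mulf_neq0 ?invr_eq0 // oppr_eq0 mulf_neq0.
exfalso; apply: (contra (1 *: val P + s *: y)).
- rewrite hqD hp0 /bf -/t /s; field.
  by [].
- by rewrite dotDr lp ly !mulr0 addr0.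
- by rewrite dotDr tp mulr0 add0r mulf_neq0.
Qed.

Lemma good_on (Y X : point) : good Y -> (on X (pol Y) <-> bf (val Y) (val X) = 0).
Proof.
move=> g; case: (prop_of_cross g (Knz (pt_nz Y))) => k e.
have k0 : k != 0 by apply: contraTneq (pt_nz (pol Y)) => k0; rewrite e k0 scale0r eqxx.
rewrite on_dot e dotZr /bf dotC; split => [/eqP|->]; last by rewrite mulr0.
by rewrite mulf_eq0 (negPf k0) => /eqP.
Qed.

Lemma two_good (P X Y : point) : X <> Y -> on X (pol P) -> on Y (pol P) ->
  bf (val P) (val X) = 0 -> bf (val P) (val Y) = 0 -> good P.
Proof.
move=> ne; rewrite !on_dot => h1 h2 h3 h4.
have hc := cross_neq ne.
case: (line_prop (pt_nz (pol P)) _ _ hc); rewrite ?(dotC (val (pol P))) //.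
case: (line_prop (Knz (pt_nz P)) h3 h4 hc) => k' e' k e.
by rewrite /good e e' crossZl crossZr crossvv !scaler0.
Qed.

Lemma caseA (P U1 U2 : point) : S U1 -> S U2 -> U1 <> U2 -> bf (val U1) (val P) = 0 ->
  bf (val U2) (val P) = 0 -> good P.
Proof.
move=> S1 S2 ne b1 b2.
have o1 : on U1 (pol P) by apply/pol_sym/(good_on _ (step1 S1)).
have o2 : on U2 (pol P) by apply/pol_sym/(good_on _ (step1 S2)).
by apply: (two_good ne o1 o2); rewrite bf_sym.
Qed.

Lemma mkY (P U : point) : S U -> hq (val P) != 0 -> bf (val U) (val P) != 0 ->
  crossv (val P) (val U) != 0 ->
  exists Y : point, [/\ good Y, bf (val Y) (val P) = 0 & bf (val Y) (val U) = 0].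
Proof.
move=> SU hp bup cpu; have hu : hq (val U) = 0 by apply/hS.
set s := - (2%:R * bf (val U) (val P)) / hq (val P).
have s0 : s != 0 by rewrite /s mulf_neq0 ?invr_eq0 // oppr_eq0 mulf_neq0.
set u' := 1 *: val U + s *: val P.
have hu' : hq u' = 0 by rewrite /u' hqD hu /s; field.
have cuu : crossv (val U) u' != 0.
  rewrite /u' scale1r; have -> : crossv (val U) (val U + s *: val P) = s *: crossv (val U) (val P).
    by apply: vec_eq; vcomp; ring.
  by rewrite scaler_eq0 negb_or s0 crossC oppr_eq0.
have u'0 : u' != 0 by apply: contraNneq cuu => ->; rewrite cross0r.
case: (val_pt u'0) => k k0 eU'.
set U' := pt u' in eU'.
have SU' : S U' := S_pt u'0 hu'.
have cUU' : crossv (val U) (val U') != 0 by rewrite eU' crossZr scaler_eq0 negb_or k0.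
have nUU' : U <> U' by move=> e; move: cUU'; rewrite e crossvv eqxx.
have cK := K_indep cUU'.
case: (val_pt cK) => m m0 eY.
set Y := pt _ in eY.
have yu : bf (val Y) (val U) = 0.
  by rewrite /bf Ksym eY dotZl dotC dot_cross1 mulr0.
have yu' : bf (val Y) (val U') = 0.
  by rewrite /bf Ksym eY dotZl dotC dot_cross2 mulr0.
have gY : good Y.
  apply: (two_good nUU') => //.
    by apply/pol_sym/(good_on _ (step1 SU)); rewrite bf_sym.
  by apply/pol_sym/(good_on _ (step1 SU')); rewrite bf_sym.
exists Y; split => //.
have ep : val P = (k * s)^-1 *: val U' + (- s^-1) *: val U.
  rewrite eU' /u' scale1r scalerA invfM mulrAC mulVf // mul1r scalerDr scalerA mulVf //.
  by rewrite scale1r addrAC scaleNr subrr add0r.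
by rewrite ep bfDr yu yu' !mulr0 addr0.
Qed.

Lemma caseB (P U1 U2 : point) : S U1 -> S U2 -> hq (val P) != 0 -> bf (val U1) (val P) != 0 ->
  bf (val U2) (val P) != 0 -> det3 (val P) (val U1) (val U2) != 0 -> good P.
Proof.
move=> S1 S2 hp b1 b2 hd.
have c1 : crossv (val P) (val U1) != 0.
  by move: hd; rewrite det_cyc det_cyc => /det_cross_nz.
have c2 : crossv (val P) (val U2) != 0.
  by move: hd; rewrite det_cyc => /det_cross_nz; rewrite crossC oppr_eq0.
case: (mkY S1 hp b1 c1) => Y1 [g1 p1 u1].
case: (mkY S2 hp b2 c2) => Y2 [g2 p2 u2].
have nY : Y1 <> Y2.
  move=> e; subst Y2; move: hd; rewrite (det_line (Knz (pt_nz Y1)) p1 u1 u2) eqxx.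
  by [].
apply: (two_good nY).
- by apply/pol_sym/(good_on _ g1).
- by apply/pol_sym/(good_on _ g2).
- by rewrite bf_sym.
- by rewrite bf_sym.
Qed.

Lemma caseB3 (P U1 U2 U3 : point) : S U1 -> S U2 -> S U3 -> hq (val P) != 0 -> bf (val U1) (val P) != 0 ->
  bf (val U2) (val P) != 0 -> bf (val U3) (val P) != 0 ->
  det3 (val U1) (val U2) (val U3) != 0 -> good P.
Proof.
move=> S1 S2 S3 hp b1 b2 b3 hd.
case: (eqVneq (det3 (val P) (val U1) (val U2)) 0) => d12; last exact: (caseB S1 S2).
case: (eqVneq (det3 (val P) (val U1) (val U3)) 0) => d13; last exact: (caseB S1 S3).
have nPU : P <> U1.
  by move=> e; move: hp; rewrite e; move/hS: S1 => ->; rewrite eqxx.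
by move: hd; rewrite (two_lines (cross_neq nPU) d12 d13) eqxx.
Qed.

Lemma all_good (A C B D : point) : general_position A C B D -> S A -> S C -> S B -> S D ->
  forall P, good P.
Proof.
case=> [[nAC nAB nAD nCB] [[nCD nBD] [n1 n2 n3 n4]]] SA SC SB SD P.
move/ncol_det: n1 => n1; move/ncol_det: n2 => n2; move/ncol_det: n3 => n3.
move/ncol_det: n4 => n4.
case: (eqVneq (hq (val P)) 0) => hp; first by apply: step1; apply/hS.
case: (eqVneq (bf (val A) (val P)) 0) => bA.
  case: (eqVneq (bf (val C) (val P)) 0) => bC; first exact: (caseA SA SC nAC).
  case: (eqVneq (bf (val B) (val P)) 0) => bB; first exact: (caseA SA SB nAB).
  case: (eqVneq (bf (val D) (val P)) 0) => bD; first exact: (caseA SA SD nAD).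
  exact: (caseB3 SC SB SD).
case: (eqVneq (bf (val C) (val P)) 0) => bC.
  case: (eqVneq (bf (val B) (val P)) 0) => bB; first by apply: (caseA SC SB nCB).
  case: (eqVneq (bf (val D) (val P)) 0) => bD; first by apply: (caseA SC SD nCD).
  exact: (caseB3 SA SB SD).
case: (eqVneq (bf (val B) (val P)) 0) => bB.
  case: (eqVneq (bf (val D) (val P)) 0) => bD; first by apply: (caseA SB SD nBD).
  exact: (caseB3 SA SC SD).
exact: (caseB3 SA SC SB).
Qed.


Hypothesis hgood : forall P, good P.

Lemma bf_addl x y w : bf (x + y) w = bf x w + bf y w.
Proof. by have := bfDl 1 1 x y w; rewrite !scale1r !mul1r. Qed.
Lemma bf_addr x y w : bf w (x + y) = bf w x + bf w y.
Proof. by rewrite bf_sym bf_addl !(bf_sym w). Qed.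

Lemma pole_bf (Q X : point) : on X (pol Q) -> bf (val Q) (val X) = 0.
Proof. exact: (good_on _ (hgood Q)).1. Qed.

Lemma S_hq U : S U -> hq (val U) = 0.
Proof. by move/hS. Qed.

Lemma bf_ne (U V : point) : S U -> S V -> U <> V -> bf (val U) (val V) != 0.
Proof.
move=> SU SV ne; apply/eqP => h.
have hc := cross_neq ne.
have hu := S_hq SU; have hv := S_hq SV.
case: (line_prop (Knz (pt_nz U)) hu h hc) => k1 e1.
case: (line_prop (Knz (pt_nz V)) _ hv hc) => [|k2 e2]; first by rewrite -/(bf _ _) bf_sym.
by move: (K_indep hc); rewrite e1 e2 crossZl crossZr crossvv !scaler0 eqxx.
Qed.

Lemma S_ncol (A B C : point) : S A -> S B -> S C -> A <> B -> A <> C -> B <> C ->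
  det3 (val A) (val B) (val C) != 0.
Proof.
move=> SA SB SC nAB nAC nBC; apply/eqP => h.
case: (span (cross_neq nAB) h) => x [y e].
have := S_hq SC; rewrite e hqD (S_hq SA) (S_hq SB) !mulr0 addr0 add0r => /eqP.
rewrite !mulf_eq0 (negPf hchar) (negPf (bf_ne SA SB nAB)) /= orbF => /orP [] /eqP h0.
  by apply: nBC; symmetry; apply: (@comb_pt_eq _ _ _ y); rewrite e h0 scale0r add0r.
by apply: nAC; symmetry; apply: (@comb_pt_eq _ _ _ x); rewrite e h0 scale0r addr0.
Qed.

Definition Qp (a b c : vec) := bf b c *: a + bf a c *: b + (- bf a b) *: c.
Definition dstar (a b c : vec) := (2%:R * bf b c) *: a + (2%:R * bf a c) *: b + (- bf a b) *: c.

Lemma det_Qp (a b c : vec) : det3 a b (Qp a b c) = - bf a b * det3 a b c.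
Proof. rewrite /Qp; vcomp; ring. Qed.
Lemma det_dstar (a b c : vec) : det3 a b (dstar a b c) = - bf a b * det3 a b c.
Proof. rewrite /dstar; vcomp; ring. Qed.

Section Tri.
Variables a b c : vec.
Hypotheses (ha : hq a = 0) (hb : hq b = 0) (hc : hq c = 0).

Lemma Qp_bf : [/\ bf (Qp a b c) a = 0, bf (Qp a b c) b = 0, bf (Qp a b c) c = 2%:R * bf a c * bf b c
   & hq (Qp a b c) = - 2%:R * bf a b * bf a c * bf b c].
Proof.
move: ha hb hc; rewrite /hq /Qp => ha' hb' hc'.
split; rewrite ?bf_addl ?bf_addr ?bfZl ?bfZr ?ha' ?hb' ?hc' ?(bf_sym b a) ?(bf_sym c a) ?(bf_sym c b);
  ring.
Qed.

Lemma hq_dstar : hq (dstar a b c) = 0.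
Proof.
move: ha hb hc; rewrite /hq /dstar => ha' hb' hc'.
rewrite ?bf_addl ?bf_addr ?bfZl ?bfZr ?ha' ?hb' ?hc' ?(bf_sym b a) ?(bf_sym c a) ?(bf_sym c b).
ring.
Qed.

Lemma hq_coord z : let x := det3 z b c in let y := det3 a z c in let zz := det3 a b z in
  (det3 a b c) ^+ 2 * hq z = 2%:R * (bf a b * x * y + bf a c * x * zz + bf b c * y * zz).
Proof.
move=> x y zz; rewrite -hqZ.
have -> : det3 a b c *: z = x *: a + y *: b + zz *: c.
  by rewrite /x /y /zz; apply: vec_eq; vcomp; ring.
move: ha hb hc; rewrite /hq => ha' hb' hc'.
rewrite ?bf_addl ?bf_addr ?bfZl ?bfZr ?ha' ?hb' ?hc' ?(bf_sym b a) ?(bf_sym c a) ?(bf_sym c b).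
ring.
Qed.

End Tri.

Lemma Hq_dstar_id (a b c z : vec) s r p :
  Hq a c b ((2%:R * s) *: a + (2%:R * r) *: b + (- p) *: c) z =
  2%:R * (p * det3 z b c * det3 a z c + r * det3 z b c * det3 a b z + s * det3 a z c * det3 a b z).
Proof. rewrite /Hq /Gf; vcomp; ring. Qed.

Lemma Hq_homog (a c b d z : vec) l : Hq a c b (l *: d) z = l * Hq a c b d z.
Proof. rewrite /Hq /Gf; vcomp; ring. Qed.


Lemma det_nz3 (x y z : vec) : det3 x y z != 0 -> z != 0.
Proof. by apply: contraNneq => ->; rewrite /det3 cross0r dotC dot0l. Qed.

Lemma hcurve_S (A C B D : point) l : S A -> S C -> S B -> general_position A C B D -> l != 0 ->
  val D = l *: dstar (val A) (val B) (val C) -> forall Z, harmonic_curve_of A C B D Z <-> S Z.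
Proof.
move=> SA SC SB gp l0 eD Z.
have gp' := gp; case: gp' => [[nAC nAB _ nCB] _].
have hd := S_ncol SA SB SC nAB nAC (nesym nCB).
rewrite hcurve_iff // eD Hq_homog /dstar Hq_dstar_id.
have := hq_coord (S_hq SA) (S_hq SB) (S_hq SC) (val Z); rewrite /= => <-.
rewrite hS; split => [/eqP|->]; last by rewrite !mulr0.
by rewrite !mulf_eq0 (negPf l0) (negPf hd) /= => /eqP.
Qed.

Lemma Q_prop (A B C Q q : point) : S A -> S B -> S C -> A <> B -> A <> C -> B <> C ->
  is_join A B q -> pol Q = q -> exists2 mu, mu != 0 & val Q = mu *: Qp (val A) (val B) (val C).
Proof.
move=> SA SB SC nAB nAC nBC [_ [Aq Bq]] pQ.
have [b1 b2 _ _] := Qp_bf (S_hq SA) (S_hq SB) (S_hq SC).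
have hd := S_ncol SA SB SC nAB nAC nBC.
have Qp0 : Qp (val A) (val B) (val C) != 0.
  apply: (@det_nz3 (val A) (val B)); rewrite det_Qp mulf_neq0 // oppr_eq0.
  exact: bf_ne.
have hc := cross_neq nAB.
have qa : bf (val Q) (val A) = 0 by apply: pole_bf; rewrite pQ.
have qb : bf (val Q) (val B) = 0 by apply: pole_bf; rewrite pQ.
case: (line_prop (Knz (pt_nz Q)) qa qb hc) => k1 e1.
case: (line_prop (Knz Qp0) b1 b2 hc) => k2 e2.
have cK : crossv (K (val Q)) (K (Qp (val A) (val B) (val C))) = 0.
  by rewrite e1 e2 crossZl crossZr crossvv !scaler0.
have cQ : crossv (val Q) (Qp (val A) (val B) (val C)) = 0.
  by case: (eqVneq (crossv (val Q) (Qp (val A) (val B) (val C))) 0) => // /K_indep; rewrite cK eqxx.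
case: (prop_of_cross cQ Qp0) => mu e; exists mu => //.
by apply: contraTneq (pt_nz Q) => m0; rewrite e m0 scale0r eqxx.
Qed.

Lemma cross_comb (q m : vec) x1 y1 x2 y2 :
  crossv (x1 *: q + y1 *: m) (x2 *: q + y2 *: m) = (x1 * y2 - y1 * x2) *: crossv q m.
Proof. apply: vec_eq; vcomp; ring. Qed.

Lemma ne_comb (X Y : point) (q m : vec) x1 y1 x2 y2 :
  val X = x1 *: q + y1 *: m -> val Y = x2 *: q + y2 *: m -> crossv q m != 0 ->
  x1 * y2 - y1 * x2 != 0 -> X <> Y.
Proof.
move=> eX eY hc hx e; subst Y.
move: (crossvv (val X)); rewrite {1}eX {1}eY cross_comb => /eqP.
by rewrite scaler_eq0 (negPf hx) (negPf hc).
Qed.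


Lemma refl_form (A C B Q q : point) : S A -> S C -> S B -> A <> C -> A <> B -> C <> B ->
  is_join A B q -> pol Q = q -> forall D, harmonic_reflection Q q C D ->
  exists2 l, l != 0 & val D = l *: dstar (val A) (val B) (val C).
Proof.
move=> SA SC SB nAC nAB nCB jq pQ.
case: (Q_prop SA SB SC nAB nAC (nesym nCB) jq pQ) => mu mu0 eQ.
have [b1 b2 b3 b4] := Qp_bf (S_hq SA) (S_hq SB) (S_hq SC).
have p0 := bf_ne SA SB nAB; have r0 := bf_ne SA SC nAC; have s0 := bf_ne SB SC (nesym nCB).
have ehq : hq (val Q) = mu ^+ 2 * (- 2%:R * bf (val A) (val B) * bf (val A) (val C) * bf (val B) (val C)).
  by rewrite eQ hqZ b4.
have ebf : bf (val Q) (val C) = mu * (2%:R * bf (val A) (val C) * bf (val B) (val C)).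
  by rewrite eQ bfZl b3.
have hqQ : hq (val Q) != 0.
  by rewrite ehq !mulf_neq0 ?expf_neq0 // oppr_eq0.
have QC : bf (val Q) (val C) != 0 by rewrite ebf !mulf_neq0.
move=> D [[[e|onC] _]|[_ [_ [n [M [jn mM hh]]]]]].
- by move: hqQ; rewrite -e (S_hq SC) eqxx.
- by move: onC; rewrite -pQ => /(good_on _ (hgood Q)) /eqP; rewrite (negPf QC).
case: mM => _ [Mn Mq].
have QM : bf (val Q) (val M) = 0 by apply: pole_bf; rewrite pQ.
case: hh => _ [_ [a1 [b1' [c1 [d1 [eC eD h]]]]]].
have ha1 : bf (val Q) (val C) = a1 * hq (val Q).
  by rewrite eC bfDr QM mulr0 addr0 /hq.
have vD : a1 *: val D = c1 *: ((2%:R * a1) *: val Q - val C).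
  apply/eqP; rewrite -subr_eq0; apply/eqP.
  transitivity ((b1' * c1 + a1 * d1) *: val M); last by rewrite h scale0r.
  by rewrite eD eC; apply: vec_eq; rewrite !mxE; ring.
have a10 : a1 != 0 by apply: contraNneq QC => a0; rewrite ha1 a0 mul0r.
have ea1 : a1 = - (mu * bf (val A) (val B))^-1.
  apply: (mulIf hqQ); rewrite -ha1 ebf ehq; field.
  by rewrite ?mu0 ?p0 ?r0 ?s0 ?hchar.
exists (c1 * mu).
  rewrite mulf_neq0 //; apply: contraTneq (pt_nz D) => c0.
  by rewrite negbK; apply/eqP; apply: (scalerI a10); rewrite vD c0 !scale0r scaler0.
apply: (scalerI a10); rewrite vD scalerA eQ.
by apply: vec_eq; rewrite /dstar /Qp !mxE ea1; field; rewrite ?mu0 ?p0.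
Qed.


Lemma det3_Zr (x y z : vec) l : det3 x y (l *: z) = l * det3 x y z.
Proof. vcomp; ring. Qed.

Lemma det_dstar2 (a b c : vec) : det3 b c (dstar a b c) = 2%:R * bf b c * det3 a b c.
Proof. rewrite /dstar; vcomp; ring. Qed.

Lemma ncolS (X Y Z : point) : S X -> S Y -> S Z -> X <> Y -> X <> Z -> Y <> Z -> ~ collinear X Y Z.
Proof. by move=> SX SY SZ n1 n2 n3 /collinear_det /eqP; apply/negP; apply: S_ncol. Qed.

Lemma part2 (A C B Q q : point) : S A -> S C -> S B -> A <> C -> A <> B -> C <> B ->
  is_join A B q -> pol Q = q ->
  is_meet (pol A) (pol B) Q /\ (exists D, harmonic_reflection Q q C D) /\
  (forall D, harmonic_reflection Q q C D ->
     [/\ general_position A C B D, S D & forall Z, harmonic_curve_of A C B D Z <-> S Z]).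
Proof.
move=> SA SC SB nAC nAB nCB jq pQ.
have jq' := jq; case: jq' => _ [Aq Bq].
case: (Q_prop SA SB SC nAB nAC (nesym nCB) jq pQ) => mu mu0 eQ.
have [b1 b2 b3 b4] := Qp_bf (S_hq SA) (S_hq SB) (S_hq SC).
have p0 := bf_ne SA SB nAB; have r0 := bf_ne SA SC nAC; have s0 := bf_ne SB SC (nesym nCB).
have hqQ : hq (val Q) != 0.
  by rewrite eQ hqZ b4 !mulf_neq0 ?expf_neq0 // oppr_eq0.
have QC : bf (val Q) (val C) != 0 by rewrite eQ bfZl b3 !mulf_neq0.
have hd := S_ncol SA SB SC nAB nAC (nesym nCB).
split.
  split; first by move/pol_inj.
  by split; apply/pol_sym; rewrite pQ.
split.
  have nQq : ~ on Q q by rewrite -pQ => /habs /S_hq /eqP; apply/negP.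
  have nCq : ~ on C q by rewrite -pQ => /(good_on _ (hgood Q)) /eqP; apply/negP.
  have nCQ : C <> Q by move=> e; move: hqQ; rewrite -e (S_hq SC) eqxx.
  have [n [Cn Qn]] : exists n : point, on C n /\ on Q n.
    exists (pt (crossv (val C) (val Q))); split; apply/on_ptc; rewrite ?det_rep1 ?det_rep2 //;
    exact: cross_neq.
  have nq : n <> q by move=> e; apply: nQq; rewrite -e.
  have [M [Mn Mq]] : exists M : point, on M n /\ on M q.
    by exists (pt (crossv (val n) (val q))); apply: on_meet.
  have nQM : Q <> M by move=> e; apply: nQq; rewrite e.
  case: (comb_on nQM Qn Mn Cn) => a1 [b1' eC].
  have b10 : b1' != 0.
    apply/eqP => e0; apply: nCQ; apply: (@comb_pt_eq _ _ _ a1).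
    by rewrite eC e0 scale0r addr0.
  have a10 : a1 != 0.
    apply/eqP => e0; apply: nCq; have -> : C = M.
      by apply: (@comb_pt_eq _ _ _ b1'); rewrite eC e0 scale0r add0r.
    done.
  have hc := cross_neq nQM.
  have fQ : val Q = 1 *: val Q + 0 *: val M by rewrite scale1r scale0r addr0.
  have fM : val M = 0 *: val Q + 1 *: val M by rewrite scale1r scale0r add0r.
  have dv0 : (- a1) *: val Q + b1' *: val M != 0.
    apply/eqP => e; move: (cross_comb (val Q) (val M) 1 0 (- a1) b1').
    rewrite -fQ e cross0r => /esym /eqP; rewrite scaler_eq0 (negPf hc) orbF.
    by rewrite mul1r mul0r subr0 (negPf b10).
  case: (val_pt dv0) => k k0 eD.
  have fD : val (pt ((- a1) *: val Q + b1' *: val M)) = (k * - a1) *: val Q + (k * b1') *: val M.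
    by rewrite eD scalerDr !scalerA.
  exists (pt ((- a1) *: val Q + b1' *: val M)); right; split => //; split => //.
  exists n, M; split.
  - by split => //; split.
  - by split => //; split.
  split; first split.
  - apply: (ne_comb fQ fM hc); rewrite mul1r mul0r subr0; exact: oner_neq0.
  - by apply: (ne_comb fQ eC hc); rewrite mul1r mul0r subr0.
  - by apply: (ne_comb fQ fD hc); rewrite mul1r mul0r subr0 mulf_neq0.
  - by apply: (ne_comb fM eC hc); rewrite mul1r mul0r sub0r oppr_eq0.
  split; first split.
  - by apply: (ne_comb fM fD hc); rewrite mul1r mul0r sub0r mulrN opprK mulf_neq0.
  - apply: (ne_comb eC fD hc).
    have -> : a1 * (k * b1') - b1' * (k * - a1) = 2%:R * k * a1 * b1' by ring.
    by rewrite !mulf_neq0.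
  exists a1, b1', (k * - a1), (k * b1'); split => //; ring.
move=> D hD; case: (refl_form SA SC SB nAC nAB nCB jq pQ hD) => l l0 eD.
have SD : S D by apply/hS; rewrite eD hqZ hq_dstar ?mulr0 //; apply: S_hq.
have dD1 : det3 (val A) (val B) (val D) != 0.
  by rewrite eD det3_Zr det_dstar !mulf_neq0 // oppr_eq0.
have dD2 : det3 (val B) (val C) (val D) != 0.
  by rewrite eD det3_Zr det_dstar2 !mulf_neq0.
have nAD : A <> D by move=> e; move: dD1; rewrite -e det_rep1 eqxx.
have nBD : B <> D by move=> e; move: dD1; rewrite -e det_rep2 eqxx.
have nCD : C <> D by move=> e; move: dD2; rewrite -e det_rep2 eqxx.
have gp : general_position A C B D.
  split; first by split.
  split; first by split.
  split; apply: ncolS => //; exact: nesym.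
split => //.
exact: (hcurve_S SA SC SB gp l0 eD).
Qed.


Lemma det_Qp_cd (a b c d : vec) :
  det3 (Qp a b c) c d = bf a c * det3 d b c - bf b c * det3 a d c.
Proof. rewrite /Qp; vcomp; ring. Qed.

Lemma Hq_E1 (a b c d : vec) : Hq a c b d (dstar a b c) =
  - 2%:R * det3 a b c * (4%:R * bf a c * bf b c * det3 a b d + bf a c * bf a b * det3 d b c
     + bf b c * bf a b * det3 a d c).
Proof. rewrite /Hq /Gf /dstar; vcomp; ring. Qed.

Lemma Hq_homz (a c b d z : vec) k : Hq a c b d (k *: z) = k ^+ 2 * Hq a c b d z.
Proof. rewrite /Hq /Gf; vcomp; ring. Qed.

Lemma on_line2 (X Y Z r : point) : X <> Y -> on X r -> on Y r ->
  (on Z r <-> det3 (val Z) (val X) (val Y) = 0).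
Proof.
move=> ne; rewrite !on_dot => hx hy.
case: (line_prop (pt_nz r) _ _ (cross_neq ne)); rewrite ?(dotC (val r)) // => k e.
have k0 : k != 0 by apply: contraTneq (pt_nz r) => k0; rewrite e k0 scale0r eqxx.
rewrite e dotZr; change (k * det3 (val Z) (val X) (val Y) = 0 <-> det3 (val Z) (val X) (val Y) = 0); split => [/eqP|->]; last by rewrite mulr0.
by rewrite mulf_eq0 (negPf k0) => /eqP.
Qed.

Lemma part1 (A C B D : point) : S A -> S C -> S B -> S D -> general_position A C B D ->
  ((forall Z, harmonic_curve_of A C B D Z <-> S Z) <->
   (forall (Q : point) (q r : point), is_join A B q -> is_join C D r -> pol Q = q -> on Q r)).
Proof.
move=> SA SC SB SD gp.
have gp' := gp; case: gp' => [[nAC nAB nAD nCB] [[nCD nBD] _]].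
have p0 := bf_ne SA SB nAB; have r0 := bf_ne SA SC nAC; have s0 := bf_ne SB SC (nesym nCB).
have hd := S_ncol SA SB SC nAB nAC (nesym nCB).
have [b1 b2 b3 b4] := Qp_bf (S_hq SA) (S_hq SB) (S_hq SC).
split.
  move=> hcur Q q r jq [_ [Cr Dr]] pQ.
  case: (Q_prop SA SB SC nAB nAC (nesym nCB) jq pQ) => mu mu0 eQ.
  apply/(@on_line2 _ _ Q _ nCD Cr Dr); rewrite eQ.
  have -> : det3 (mu *: Qp (val A) (val B) (val C)) (val C) (val D) =
     mu * det3 (Qp (val A) (val B) (val C)) (val C) (val D) by vcomp; ring.
  rewrite det_Qp_cd.
  have ds0 : dstar (val A) (val B) (val C) != 0.
    by apply: (@det_nz3 (val A) (val B)); rewrite det_dstar mulf_neq0 // oppr_eq0.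
  have SE := S_pt ds0 (hq_dstar (S_hq SA) (S_hq SB) (S_hq SC)).
  have := (hcur _).2 SE; rewrite hcurve_iff //.
  case: (val_pt ds0) => k k0 ->; rewrite Hq_homz Hq_E1 => /eqP.
  rewrite !mulf_eq0 (negPf k0) oppr_eq0 (negPf hchar) (negPf hd) /= => /eqP E1.
  have := hq_coord (S_hq SA) (S_hq SB) (S_hq SC) (val D); rewrite /= (S_hq SD) mulr0.
  move/esym/eqP; rewrite mulf_eq0 (negPf hchar) /= => /eqP E2.
  set al := det3 (val D) (val B) (val C) in E1 E2 *.
  set be := det3 (val A) (val D) (val C) in E1 E2 *.
  set ga := det3 (val A) (val B) (val D) in E1 E2 *.
  set p := bf (val A) (val B) in E1 E2 p0 *.
  set rr := bf (val A) (val C) in E1 E2 r0 *.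
  set ss := bf (val B) (val C) in E1 E2 s0 *.
  have : p * (rr * al - ss * be) ^+ 2 = 0.
    transitivity ((al * rr + be * ss) * (4%:R * rr * ss * ga + rr * p * al + ss * p * be)
       - 4%:R * rr * ss * (p * al * be + rr * al * ga + ss * be * ga)); first by ring.
    by rewrite E1 E2 !mulr0 subrr.
  move/eqP; rewrite mulf_eq0 (negPf p0) expf_eq0 /= => /eqP ->.
  by rewrite mulr0.
move=> hpole.
have [g pg] : exists g, forall l, pol (g l) = l.
  by case: hpol => [[g _ h2]] _; exists g.
have [q jq] : exists q, is_join A B q.
  exists (pt (crossv (val A) (val B))); split => //.
  by split; apply/on_ptc; rewrite ?det_rep1 ?det_rep2 //; apply: cross_neq.
have [r jr] : exists r, is_join C D r.
  exists (pt (crossv (val C) (val D))); split => //.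
  by split; apply/on_ptc; rewrite ?det_rep1 ?det_rep2 //; apply: cross_neq.
have Qr := hpole _ _ _ jq jr (pg q).
case: (Q_prop SA SB SC nAB nAC (nesym nCB) jq (pg q)) => mu mu0 eQ.
case: jr => _ [Cr Dr].
move/(@on_line2 _ _ (g q) _ nCD Cr Dr): Qr; rewrite eQ.
have -> : det3 (mu *: Qp (val A) (val B) (val C)) (val C) (val D) =
   det3 (val C) (Qp (val A) (val B) (val C)) (val D) * - mu by vcomp; ring.
move/eqP; rewrite mulf_eq0 oppr_eq0 (negPf mu0) orbF => /eqP hz.
have hqQp : hq (Qp (val A) (val B) (val C)) != 0 by rewrite b4 !mulf_neq0 // oppr_eq0.
have cc : crossv (val C) (Qp (val A) (val B) (val C)) != 0.
  apply/eqP => h0.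
  have : crossv (Qp (val A) (val B) (val C)) (val C) = 0 by rewrite crossC h0 oppr0.
  move/prop_of_cross => /(_ (pt_nz C)) [t et].
  by move: hqQp; rewrite et hqZ (S_hq SC) mulr0 eqxx.
case: (span cc hz) => u [v eD].
have v0 : v != 0.
  apply/eqP => v0; apply: nCD; symmetry; apply: (@comb_pt_eq _ _ _ u).
  by rewrite eD v0 scale0r addr0.
have := S_hq SD; rewrite eD hqD (S_hq SC) bf_sym b3 b4 mulr0 add0r => /eqP.
have -> : 2%:R * u * v * (2%:R * bf (val A) (val C) * bf (val B) (val C)) +
  v ^+ 2 * (- 2%:R * bf (val A) (val B) * bf (val A) (val C) * bf (val B) (val C)) =
  (2%:R * bf (val A) (val C) * bf (val B) (val C) * v) * (2%:R * u - bf (val A) (val B) * v).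
  by ring.
rewrite !mulf_eq0 (negPf hchar) (negPf r0) (negPf s0) (negPf v0) /= subr_eq0 => /eqP eu.
apply: (hcurve_S SA SC SB gp (l := v / 2%:R)).
  by rewrite mulf_neq0 // invr_eq0.
have eu' : u = bf (val A) (val B) * v / 2%:R.
  by apply: (mulfI hchar); rewrite eu; field.
rewrite eD eu' /Qp /dstar; apply: vec_eq; rewrite !mxE; by field.
Qed.

End Conic.



Section Final.
Variable F : fieldType.
Hypothesis hchar : (2%:R : F) != 0.
Local Notation vec := 'rV[F]_3.
Local Notation point := (point F).
Ltac vcomp := rewrite /det3 /dotv /crossv ?mxE /=.

Definition Kq (a c b d z : vec) : vec :=
  det3 z a c *: crossv b d + det3 z b d *: crossv a c + det3 z a d *: crossv b c
  + det3 z b c *: crossv a d.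

Variables a c b d : vec.

Lemma Kq_lin al be x y : Kq a c b d (al *: x + be *: y) = al *: Kq a c b d x + be *: Kq a c b d y.
Proof. rewrite /Kq; apply: vec_eq; vcomp; ring. Qed.
Lemma Kq_sym x y : dotv (Kq a c b d x) y = dotv x (Kq a c b d y).
Proof. rewrite /Kq; vcomp; ring. Qed.
Lemma Kq_hq z : dotv (Kq a c b d z) z = 2%:R * Hq a c b d z.
Proof. rewrite /Kq /Hq /Gf; vcomp; ring. Qed.
Lemma Kq_a z : dotv (Kq a c b d z) a = det3 a b z * det3 a d c - 2%:R * det3 a z c * det3 a b d.
Proof. rewrite /Kq; vcomp; ring. Qed.
Lemma Kq_b z : dotv (Kq a c b d z) b = det3 a b z * det3 d b c - 2%:R * det3 a b d * det3 z b c.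
Proof. rewrite /Kq; vcomp; ring. Qed.
Lemma Kq_c z : dotv (Kq a c b d z) c = det3 a z c * det3 d b c + det3 z b c * det3 a d c.
Proof. rewrite /Kq; vcomp; ring. Qed.

Lemma Kq_nd : det3 a b c != 0 -> det3 d b c != 0 -> det3 a d c != 0 -> det3 a b d != 0 ->
  forall z, Kq a c b d z = 0 -> z = 0.
Proof.
move=> hD hal hbe hga z hz.
have e1 := Kq_a z; have e2 := Kq_b z; have e3 := Kq_c z.
rewrite hz dot0l in e1; rewrite hz dot0l in e2; rewrite hz dot0l in e3.
move: e1 e2 e3 hal hbe hga.
set x := det3 z b c; set y := det3 a z c; set zz := det3 a b z.
set al := det3 d b c; set be := det3 a d c; set ga := det3 a b d.
move=> e1 e2 e3 hal hbe hga.
have h4 : 4%:R * ga * be * x = 0.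
  transitivity (al * (zz * be - 2%:R * y * ga) - be * (zz * al - 2%:R * ga * x)
     + 2%:R * ga * (y * al + x * be)); first by ring.
  by rewrite -e1 -e2 -e3 !mulr0 subrr addr0.
have h40 : (4%:R : F) != 0.
  have -> : (4%:R : F) = 2%:R * 2%:R by rewrite -natrM.
  by rewrite mulf_neq0.
have x0 : x = 0 by move/eqP: h4; rewrite !mulf_eq0 (negPf h40) (negPf hga) (negPf hbe) /= => /eqP.
have y0 : y = 0.
  by move/eqP: e3; rewrite eq_sym x0 mul0r addr0 mulf_eq0 (negPf hal) orbF => /eqP.
have zz0 : zz = 0.
  move/eqP: e1; rewrite eq_sym y0 mulr0 mul0r subr0 mulf_eq0 (negPf hbe) orbF => /eqP //.
apply: (scalerI hD); rewrite cramer -/x -/y -/zz x0 y0 zz0 !scale0r !addr0 scaler0.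
done.
Qed.

End Final.

Unset Implicit Arguments.

Theorem mainTheorem8 (F : fieldType) (hchar : (2%:R : F) != 0)
    (S : point F -> Prop) (pol : point F -> line F) :
  is_harmonic_curve S ->
  is_polarity pol ->
  (forall P, on P (pol P) <-> S P) ->
  (* part 1 *)
  (forall A C B D : point F,
     S A -> S C -> S B -> S D -> general_position A C B D ->
     ((forall Z, harmonic_curve_of A C B D Z <-> S Z) <->
      (forall (Q : point F) (q r : line F),
         is_join A B q -> is_join C D r -> pol Q = q -> on Q r))) /\
  (* part 2 *)
  (forall (A C B : point F) (Q : point F) (q : line F),
     S A -> S C -> S B -> A <> C -> A <> B -> C <> B ->
     is_join A B q -> pol Q = q ->
     is_meet (pol A) (pol B) Q /\
     (exists D, harmonic_reflection Q q C D) /\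
     (forall D, harmonic_reflection Q q C D ->
        [/\ general_position A C B D, S D &
            forall Z, harmonic_curve_of A C B D Z <-> S Z])).
Proof.
move=> [A0 [C0 [B0 [D0 [gp0 hS0]]]]] hpol habs.
pose K := Kq (val A0) (val C0) (val B0) (val D0).
have Klin : forall al be x y, K (al *: x + be *: y) = al *: K x + be *: K y.
  by move=> *; apply: Kq_lin.
have Ksym : forall x y, dotv (K x) y = dotv x (K y) by move=> *; apply: Kq_sym.
have gp0' := gp0; case: gp0' => _ [_ [n1 n2 n3 n4]].
move/ncol_det: n1 => n1; move/ncol_det: n2 => n2; move/ncol_det: n3 => n3.
move/ncol_det: n4 => n4.
have Knd : forall x, K x = 0 -> x = 0.
  apply: (Kq_nd hchar).
  - by apply/eqP => h; case: (det0_perm h) => _ _ _ h' _; move: n1; rewrite h' eqxx.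
  - by apply/eqP => h; case: (det0_perm h) => _ _ _ _ h'; move: n4; rewrite h' eqxx.
  - by apply/eqP => h; case: (det0_perm h) => _ _ _ h' _; move: n2; rewrite h' eqxx.
  - exact: n3.
have hS : forall Z, S Z <-> hq K (val Z) = 0.
  move=> Z; rewrite hS0 (hcurve_iff hchar _ gp0) /hq /bf Kq_hq.
  split => [->|/eqP]; first by rewrite mulr0.
  by rewrite mulf_eq0 (negPf hchar) => /eqP.
have SA : S A0 by apply/hS0; left.
have SC : S C0 by apply/hS0; right; left.
have SB : S B0 by apply/hS0; right; right; left.
have SD : S D0 by apply/hS0; right; right; right; left.
have hgood := all_good hchar Klin Ksym Knd hS hpol habs gp0 SA SC SB SD.
split.
  by move=> A C B D; apply: (part1 hchar Klin Ksym Knd hS hpol hgood).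
by move=> A C B Q q; apply: (part2 hchar Klin Ksym Knd hS hpol habs hgood).
Qed.
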